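(* Let $X$ be a Banach space, $W\subseteq X$ a convex, symmetric and bounded set, $1<p<\infty$, and $Y=\Delta_p(W,X)$. A subset $A\subseteq W$ is a Banach-Saks subset of $X$ if and only if $A$ is a Banach-Saks subset of $Y$.
   Context: The Davis-Figiel-Johnson-Pe\l czy\'nski interpolation space $\Delta_p(W,X)$ is $\{x\in X:\|x\|_Y<\infty\}$ with $\|x\|_Y=\|(|x|_n)_n\|_{\ell_p}$, where $|x|_n=\inf\{\lambda>0: x/\lambda\in 2^nW+2^{-n}B_X\}$ and $B_X$ is the closed unit ball. A subset of a Banach space is a Banach-Saks set if every sequence in it has a subsequence whose Ces\`aro means converge in norm. *)

(* Defs.v *)
From HB Require Import structures.
From mathcomp Require Import all_boot all_order all_algebra.
From mathcomp Require Import all_classical all_reals all_analysis.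
Set Implicit Arguments. Unset Strict Implicit. Unset Printing Implicit Defensive.
Import Order.TTheory GRing.Theory Num.Theory.
Import numFieldNormedType.Exports.
Local Open Scope classical_set_scope.
Local Open Scope ring_scope.

Section DFJP.
Variables (R : realType) (X : normedModType R).

Definition symmetric_set (W : set X) : Prop := forall x, W x -> W (- x).

Definition closed_unit_ball : set X := [set b | `|b| <= 1].

Definition dfjp_level (W : set X) (n : nat) : set X :=
  [set z | exists w b, W w /\ closed_unit_ball b /\
           z = (2 ^+ n : R) *: w + (2 ^- n : R) *: b].

Definition dfjp_gauge (W : set X) (n : nat) (x : X) : R :=
  inf [set l : R | 0 < l /\ dfjp_level W n (l^-1 *: x)].

(* ||x||_Y = ( sum_n |x|_n^p )^{1/p}, an extended real (+oo off Y) *)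
Definition dfjp_norm (W : set X) (p : R) (x : X) : \bar R :=
  poweR (\sum_(0 <= n <oo) ((dfjp_gauge W n x) `^ p)%:E)%E p^-1.

Definition dfjp_space (W : set X) (p : R) : set X :=
  [set x | (dfjp_norm W p x < +oo)%E].

Definition cesaro (u : nat -> X) (phi : nat -> nat) (k : nat) : X :=
  (k.+1%:R)^-1 *: \sum_(i < k.+1) u (phi i).

Definition strictly_increasing (phi : nat -> nat) : Prop :=
  forall m n, (m < n)%N -> (phi m < phi n)%N.

Definition banach_saks_X (A : set X) : Prop :=
  forall u : nat -> X, (forall n, A (u n)) ->
    exists phi, strictly_increasing phi /\
      exists y : X, cesaro u phi @ \oo --> y.

Definition banach_saks_Y (W : set X) (p : R) (A : set X) : Prop :=
  forall u : nat -> X, (forall n, A (u n)) ->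
    exists phi, strictly_increasing phi /\
      exists y : X, dfjp_space W p y /\
        (fun k => dfjp_norm W p (cesaro u phi k - y)) @ \oo --> 0%E.

End DFJP.

(* Main.v *)
Require Import Defs.
From HB Require Import structures.
From mathcomp Require Import all_boot all_order all_algebra.
From mathcomp Require Import all_classical all_reals all_analysis.
From mathcomp Require Import ring lra.
Import Order.TTheory GRing.Theory Num.Theory.
Import numFieldNormedType.Exports.
Local Open Scope classical_set_scope.
Local Open Scope ring_scope.

Section T.
Context {R : realType}.

Lemma term_bound (p t g : R) n : 0 < p -> 0 <= t -> 0 <= g ->
  g <= 2 * (2 ^+ n)^-1 -> g <= 2 ^+ n * t ->
  g `^ p <= (8 * t) `^ (p / 4) * ((4^-1) `^ (p / 4)) ^+ n.
Proof.
move=> p0 t0 g0 h1 h2.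
have a0 : 0 < (2 ^+ n : R) by apply: exprn_gt0.
set a := (2 ^+ n : R) in a0 h1 h2 *.
have h4 : g ^+ 4 <= 8 * t * (4^-1) ^+ n.
  apply: (@le_trans _ _ ((2 * a^-1) ^+ 3 * (a * t))).
    rewrite exprSr; apply: ler_pM; [exact: exprn_ge0 | exact: g0 | | exact: h2].
    apply: lerXn2r; [by rewrite nnegrE | | exact: h1].
    by rewrite nnegrE mulr_ge0 // invr_ge0 ltW.
  have -> : (4^-1 : R) ^+ n = (a ^+ 2)^-1.
    rewrite exprVn /a -exprM mulnC exprM; congr (_ ^+ _)^-1.
    by rewrite expr2 -natrM.
  rewrite le_eqVlt; apply/orP; left; apply/eqP.
  by field; rewrite gt_eqF.
have s0 : 0 <= p / 4 by rewrite divr_ge0 // ltW.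
have -> : g `^ p = (g ^+ 4) `^ (p / 4).
  by rewrite -powR_mulrn // -powRrM; congr (_ `^ _); field.
apply: (le_trans (ge0_ler_powR s0 _ _ h4)).
- by rewrite nnegrE exprn_ge0.
- by rewrite nnegrE mulr_ge0 ?exprn_ge0 // mulr_ge0 // invr_ge0.
rewrite le_eqVlt; apply/orP; left; apply/eqP.
rewrite powRM ?exprn_ge0 ?mulr_ge0 // ?invr_ge0 //.
congr (_ * _).
rewrite -[(4^-1 : R) ^+ n]powR_mulrn ?invr_ge0 //.
by rewrite -powRrM (mulrC n%:R) (powRrM _ (p / 4)) powR_mulrn // powR_ge0.
Qed.
Lemma series_bound (f : nat -> R) K q : 0 <= K -> 0 < q -> q < 1 ->
  (forall n, 0 <= f n) -> (forall n, f n <= K * q ^+ n) ->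
  (\sum_(0 <= n <oo) (f n)%:E <= (K * (1 - q)^-1)%:E)%E.
Proof.
move=> K0 q0 q1 f0 fK.
apply: lime_le.
  by apply: is_cvg_nneseries => n _ _; rewrite lee_fin.
apply: nearW => N.
rewrite sumEFin lee_fin.
apply: (le_trans _ (geometric_le_lim N K0 q0 _)); last by rewrite ger0_norm // ltW.
rewrite /series /=.
by apply: ler_sum => i _; exact: fK.
Qed.
Definition qq (p : R) := (4^-1 : R) `^ (p / 4).
Definition BB (p t : R) := ((8 * t) `^ (p / 4) * (1 - qq p)^-1) `^ (p^-1).

Lemma qq_gt0 p : 0 < qq p.
Proof. by rewrite /qq powR_gt0 // invr_gt0. Qed.

Lemma qq_lt1 p : 0 < p -> qq p < 1.
Proof.
move=> p0; rewrite /qq.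
have h := @gt0_ltr_powR R (p / 4) (divr_gt0 p0 (ltr0n _ 4)) (4^-1) 1.
rewrite powR1 in h; apply: h; rewrite ?nnegrE ?invr_ge0 //.
by rewrite invf_lt1 // ltr1n.
Qed.

Lemma BB_ge0 p t : 0 <= BB p t.
Proof. exact: powR_ge0. Qed.

Lemma BB_mono p t s : 0 < p -> 0 <= t -> t <= s -> BB p t <= BB p s.
Proof.
move=> p0 t0 ts.
have c0 : 0 < (1 - qq p)^-1 by rewrite invr_gt0 subr_gt0 qq_lt1.
rewrite /BB; apply: (@ge0_ler_powR R p^-1).
- by rewrite invr_ge0 ltW.
- by rewrite nnegrE mulr_ge0 ?powR_ge0 // ltW.
- by rewrite nnegrE mulr_ge0 ?powR_ge0 // ltW.
apply: ler_wpM2r; first exact: ltW.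
apply: (@ge0_ler_powR R (p / 4)).
- by rewrite divr_ge0 // ltW.
- by rewrite nnegrE mulr_ge0.
- by rewrite nnegrE mulr_ge0 // (le_trans t0).
by rewrite ler_wpM2l.
Qed.

Lemma BB_small p e : 0 < p -> 0 < e ->
  exists2 eta, 0 < eta & forall t, 0 <= t -> t <= eta -> BB p t <= e.
Proof.
move=> p0 e0.
have c0 : 0 < (1 - qq p)^-1 by rewrite invr_gt0 subr_gt0 qq_lt1.
set c := (1 - qq p)^-1 in c0 *.
exists ((e `^ p / c) `^ (4 / p) / 8).
  by rewrite divr_gt0 // powR_gt0 // divr_gt0 // powR_gt0.
move=> t t0 te.
apply: (le_trans (BB_mono p t _ p0 t0 te)).
rewrite /BB -/c mulrCA mulfV // mulr1 -powRrM.
have -> : 4 / p * (p / 4) = 1 by field; rewrite gt_eqF.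
rewrite powRr1; last by rewrite divr_ge0 ?powR_ge0 // ltW.
rewrite mulfVK ?gt_eqF // -powRrM mulfV ?gt_eqF // powRr1 //.
exact: ltW.
Qed.
End T.

Section S.
Variables (R : realType) (X : normedModType R) (W : set X).
Hypotheses (cW : convex_set W) (sW : symmetric_set W) (w0 : X) (Ww0 : W w0).

Lemma convW x y (t : R) : W x -> W y -> 0 <= t -> t <= 1 ->
  W (t *: x + (1 - t) *: y).
Proof.
move=> Wx Wy t0 t1.
have := cW x y (Itv01 t0 t1).
rewrite !inE => /(_ Wx Wy).
done.
Qed.

Lemma W0 : W 0.
Proof.
have := convW w0 (- w0) (2^-1) Ww0 (sW _ Ww0).
rewrite scalerN -scaleNr.
have -> : 1 - 2^-1 = 2^-1 :> R by field.
rewrite scaleNr subrr; apply => //.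
by rewrite invf_le1 // ler1n.
Qed.

Lemma scaleW t w : 0 <= t -> t <= 1 -> W w -> W (t *: w).
Proof.
move=> t0 t1 Ww; have := convW w 0 t Ww W0 t0 t1.
by rewrite scaler0 addr0.
Qed.

Let E n z := [set l : R | 0 < l /\ dfjp_level W n (l^-1 *: z)].

Lemma gauge_le n z l : 0 < l -> dfjp_level W n (l^-1 *: z) ->
  dfjp_gauge W n z <= l.
Proof.
move=> l0 hl; apply: (@ge_inf _ (E n z)); last by split.
by exists 0 => x [/ltW].
Qed.

Lemma level_ball n z l : 0 < l -> 2 ^+ n * `|z| <= l ->
  dfjp_level W n (l^-1 *: z).
Proof.
move=> l0 hl.
have a0 : 0 < (2 ^+ n : R) by apply: exprn_gt0.
exists 0, ((2 ^+ n / l) *: z); split; first exact: W0.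
split.
  rewrite /closed_unit_ball /= normrZ ger0_norm; last by rewrite divr_ge0 // ltW.
  by rewrite mulrAC ler_pdivrMr // mul1r.
by rewrite scaler0 add0r scalerA mulrA mulVf ?gt_eqF // mul1r.
Qed.

Lemma gauge_le_ball n z l : 0 < l -> 2 ^+ n * `|z| <= l ->
  dfjp_gauge W n z <= l.
Proof. by move=> l0 hl; apply: gauge_le => //; apply: level_ball. Qed.

Lemma gauge_ge0 n z : 0 <= dfjp_gauge W n z.
Proof.
apply: lb_le_inf.
  have h0 : 0 < 2 ^+ n * `|z| + 1 :> R by rewrite ltr_wpDl // mulr_ge0 // exprn_ge0.
  exists (2 ^+ n * `|z| + 1); split => //.
  by apply: level_ball => //; rewrite lerDl.
by move=> x [/ltW].
Qed.

Lemma gauge_le_norm n z : dfjp_gauge W n z <= 2 ^+ n * `|z|.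
Proof.
apply/ler_addgt0Pr => e e0; apply: gauge_le_ball.
  by rewrite ltr_wpDl // mulr_ge0 // exprn_ge0.
by rewrite lerDl ltW.
Qed.

Lemma gauge_le_2W n z : (forall e, 0 < e -> exists w, W w /\ `|z - 2 *: w| <= e) ->
  dfjp_gauge W n z <= 2 * (2 ^+ n)^-1.
Proof.
move=> hz; apply/ler_addgt0Pr => d d0.
have a0 : 0 < (2 ^+ n : R) by apply: exprn_gt0.
set a := (2 ^+ n : R) in a0 *.
have l0 : 0 < 2 * a^-1 + d by rewrite ltr_wpDl // mulr_ge0 // invr_ge0 ltW.
set l := 2 * a^-1 + d in l0 *.
have [w [Ww hw]] := hz (l / a) (divr_gt0 l0 a0).
apply: gauge_le => //.
exists ((2 / (l * a)) *: w), ((a / l) *: (z - 2 *: w)); split.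
  apply: scaleW => //; first by rewrite divr_ge0 // mulr_ge0 // ltW.
  rewrite ler_pdivrMr ?mulr_gt0 // mul1r /l mulrDl -mulrA mulVf ?gt_eqF // mulr1.
  by rewrite lerDl mulr_ge0 // ltW.
split.
  rewrite /closed_unit_ball /= normrZ ger0_norm; last by rewrite divr_ge0 // ltW.
  rewrite -ler_pdivlMl ?divr_gt0 // invf_div.
  by rewrite mulr1.
rewrite !scalerA.
have -> : a * (2 / (l * a)) = l^-1 * 2.
  by field; rewrite !gt_eqF.
have -> : a^-1 * (a / l) = l^-1.
  by field; rewrite !gt_eqF.
by rewrite -scalerA -scalerDr [_ + (z - _)]addrC subrK.
Qed.

Lemma gauge0_lb M z : (forall w, W w -> `|w| <= M) ->
  `|z| <= (M + 1) * dfjp_gauge W 0 z.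
Proof.
move=> hM.
have M0 : 0 <= M by have := hM 0 W0; rewrite normr0.
have M10 : 0 < M + 1 by rewrite ltr_wpDl.
rewrite -ler_pdivrMl //.
apply: lb_le_inf.
  have h0 : 0 < 2 ^+ 0 * `|z| + 1 :> R by rewrite ltr_wpDl // mulr_ge0 // exprn_ge0.
  exists (2 ^+ 0 * `|z| + 1); split => //.
  by apply: level_ball => //; rewrite lerDl.
move=> l [l0 [w [b [Ww [hb hl]]]]].
rewrite expr0 invr1 !scale1r in hl.
have -> : z = l *: (w + b) by rewrite -hl scalerA mulfV ?gt_eqF // scale1r.
rewrite ler_pdivrMl // normrZ gtr0_norm // mulrC.
apply: ler_wpM2r; first exact: ltW.
by rewrite (le_trans (ler_normD _ _)) // lerD // hM.
Qed.

Definition approx2W z := forall e, 0 < e -> exists w, W w /\ `|z - 2 *: w| <= e.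

Lemma norm_bound p z : 0 < p -> approx2W z ->
  exists h, dfjp_norm W p z = h%:E /\ 0 <= h /\ h <= BB p `|z|.
Proof.
move=> p0 hz.
have q0 := qq_gt0 p; have q1 := qq_lt1 p p0.
have hS : (\sum_(0 <= n <oo) ((dfjp_gauge W n z) `^ p)%:E <=
    ((8 * `|z|) `^ (p / 4) * (1 - qq p)^-1)%:E)%E.
  apply: series_bound => //.
  - by move=> n; exact: powR_ge0.
  - move=> n; apply: term_bound => //.
    + exact: gauge_ge0.
    + exact: gauge_le_2W.
    + exact: gauge_le_norm.
have S0 : (0 <= \sum_(0 <= n <oo) ((dfjp_gauge W n z) `^ p)%:E)%E.
  by apply: nneseries_ge0 => n _ _; rewrite lee_fin powR_ge0.
set S := (\sum_(0 <= n <oo) _)%E in hS S0.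
have Sfin : S \is a fin_num by rewrite ge0_fin_numE // (le_lt_trans hS) ?ltry.
exists (fine S `^ p^-1); split.
  by rewrite /dfjp_norm -/S -[S]fineK // poweR_EFin.
split; first exact: powR_ge0.
rewrite /BB; apply: (@ge0_ler_powR R p^-1).
- by rewrite invr_ge0 ltW.
- by rewrite nnegrE fine_ge0.
- by rewrite nnegrE mulr_ge0 ?powR_ge0 // invr_ge0 subr_ge0 ltW.
by rewrite -lee_fin fineK.
Qed.

Lemma gauge0_le_norm p z : 0 < p -> dfjp_norm W p z \is a fin_num ->
  dfjp_gauge W 0 z <= fine (dfjp_norm W p z).
Proof.
move=> p0; rewrite /dfjp_norm => hfin.
have S0 : (0 <= \sum_(0 <= n <oo) ((dfjp_gauge W n z) `^ p)%:E)%E.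
  by apply: nneseries_ge0 => n _ _; rewrite lee_fin powR_ge0.
have h1 : (((dfjp_gauge W 0 z) `^ p)%:E <= \sum_(0 <= n <oo) ((dfjp_gauge W n z) `^ p)%:E)%E.
  have := @nneseries_lim_ge R (fun n => ((dfjp_gauge W n z) `^ p)%:E) xpredT 0 1.
  rewrite big_nat1; apply => n _ _; by rewrite lee_fin powR_ge0.
set S := (\sum_(0 <= n <oo) _)%E in hfin S0 h1 *.
have Sfin : S \is a fin_num.
  rewrite ge0_fin_numE // lt_neqAle leey andbT; apply/eqP => Sy.
  by move: hfin; rewrite Sy poweRyr // invr_neq0 // gt_eqF.
rewrite -[S]fineK // poweR_EFin /=.
rewrite -[S]fineK // lee_fin in h1.
have g0 := gauge_ge0 0 z.
rewrite -{1}(powRr1 g0) -(@mulfV _ p) ?gt_eqF // powRrM.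
apply: (@ge0_ler_powR R p^-1) => //.
- by rewrite invr_ge0 ltW.
- by rewrite nnegrE powR_ge0.
- by rewrite nnegrE fine_ge0.
Qed.

Lemma avgW n (f : nat -> X) : (forall i, W (f i)) ->
  W ((n.+1%:R)^-1 *: \sum_(i < n.+1) f i).
Proof.
move=> Wf; elim: n => [|n IH].
  by rewrite big_ord1 invr1 scale1r.
rewrite big_ord_recr /=.
have -> : (n.+2%:R : R)^-1 *: (\sum_(i < n.+1) f i + f n.+1) =
  (n.+1%:R / n.+2%:R) *: ((n.+1%:R)^-1 *: \sum_(i < n.+1) f i) +
  (1 - n.+1%:R / n.+2%:R) *: f n.+1.
  rewrite scalerA scalerDr; congr (_ *: _ + _ *: _).
    field; have := ler0n R n; move=> hn.
    by apply/andP; split; apply/eqP; lra.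
  have -> : (n.+2%:R : R) = n.+1%:R + 1 by rewrite -natr1.
  field; have := ler0n R n; move=> hn.
  by apply/eqP; lra.
apply: convW => //.
by rewrite ler_pdivrMr // mul1r ler_nat.
Qed.
End S.

Lemma mid_eq (R : realType) (X : normedModType R) (a b y : X) :
  a - y - 2 *: (2^-1 *: a + 2^-1 *: - b) = b - y.
Proof.
rewrite scalerDr !scalerA mulfV ?pnatr_eq0 // !scale1r.
by rewrite opprB addrC addrA subrK.
Qed.

Theorem lemma4p14 (R : realType) (X : completeNormedModType R)
  (W : set X) (p : R) (A : set X) :
  convex_set W -> symmetric_set W -> bounded_set W ->
  1 < p -> A `<=` W ->
  banach_saks_X A <-> banach_saks_Y W p A.
Proof.
move=> cW sW bW p1 AW.
have p0 : 0 < p := lt_trans ltr01 p1.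
split.
- move=> hX u Au.
  have Ww0 : W (u 0%N) := AW _ (Au 0%N).
  have [phi [sphi [y hy]]] := hX u Au.
  exists phi; split => //; exists y.
  have Wc k : W (Defs.cesaro u phi k).
    by rewrite /Defs.cesaro; apply: (avgW _ _ _ cW k (fun i => u (phi i))) => i; apply: AW.
  have apx_y : approx2W R X W y.
    move=> e e0; have [N _ hN] := cvgr_dist_le _ _ hy _ e0.
    exists (2^-1 *: Defs.cesaro u phi N); split.
      apply: (scaleW _ _ _ cW sW _ Ww0) => //.
      by rewrite invf_le1 // ler1n.
    by rewrite scalerA mulfV // scale1r; exact: (hN N (leqnn N)).
  have apx k : approx2W R X W (Defs.cesaro u phi k - y).
    move=> e e0; have [N _ hN] := cvgr_dist_le _ _ hy _ e0.
    exists (2^-1 *: Defs.cesaro u phi k + (1 - 2^-1) *: - Defs.cesaro u phi N); split.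
      apply: (convW _ _ _ cW) => //.
      - by apply: sW.
      - by rewrite invf_le1 // ler1n.
    have -> : (1 - 2^-1 : R) = 2^-1 by field.
    by rewrite mid_eq distrC; exact: (hN N (leqnn N)).
  split.
    rewrite /dfjp_space /=.
    have [h [-> _]] := norm_bound _ _ _ cW sW _ Ww0 _ _ p0 apx_y.
    exact: ltry.
  apply: cvg_EFin.
    apply: nearW => k.
    by have [h [-> _]] := norm_bound _ _ _ cW sW _ Ww0 _ _ p0 (apx k).
  apply/cvgr0Pnorm_le => e e0.
  have [eta eta0 heta] := BB_small p e p0 e0.
  apply: filterS (cvgr_dist_le _ _ hy _ eta0) => k hk.
  have [h [hE [h0 hB]]] := norm_bound _ _ _ cW sW _ Ww0 _ _ p0 (apx k).
  rewrite /= hE /= ger0_norm //.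
  apply: (le_trans hB); apply: heta => //; by rewrite distrC.
- move=> hY u Au.
  have Ww0 : W (u 0%N) := AW _ (Au 0%N).
  have [phi [sphi [y [Yy hy]]]] := hY u Au.
  exists phi; split => //; exists y.
  have [M0 [_ hM0]] := bW.
  have hM : forall w, W w -> `|w| <= M0 + 1.
    by move=> w Ww; apply: (hM0 (M0 + 1)) => //; rewrite ltrDl.
  have M0' : 0 <= M0 + 1 by apply: le_trans (hM _ Ww0).
  have M1 : 0 < M0 + 1 + 1 by rewrite ltr_wpDl.
  move/fine_cvgP: hy => [hfin hf].
  apply/cvgrPdist_le => e e0.
  have eM : 0 < e / (M0 + 1 + 1) by rewrite divr_gt0.
  move/cvgr0Pnorm_le: hf => /(_ _ eM) hf.
  apply: filterS2 hfin hf => k hk hfk.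
  rewrite distrC.
  apply: (le_trans (gauge0_lb _ _ _ cW sW _ Ww0 _ _ hM)).
  apply: (le_trans (ler_wpM2l (ltW M1) (gauge0_le_norm _ _ _ cW sW _ Ww0 _ _ p0 hk))).
  rewrite -ler_pdivlMl //.
  rewrite mulrC; apply: le_trans hfk; exact: ler_norm.
Qed.
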